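(* Let $p>3$ be a prime and $f:V_n^{(p)}\to\mathbb{F}_p$ a function with $f(0)=0$. Suppose that for every $a\in\mathbb{F}_p^*$ there is an even integer $l_a$ with $2\le l_a\le p-1$ such that $f(ax)=a^{l_a}f(x)$ for all $x\in V_n^{(p)}$. Then the defining-set codes $\mathcal{C}_{D_{f,0}\setminus\{0\}}$, $\mathcal{C}_{D_{f,sq}}$ and $\mathcal{C}_{D_{f,nsq}}$ are self-orthogonal.
   Context: $V_n^{(p)}$ is an $n$-dimensional $\mathbb{F}_p$-vector space with a non-degenerate symmetric bilinear form $\langle\cdot,\cdot\rangle_n$; $\mathbb{F}_p^*=\mathbb{F}_p\setminus\{0\}$; $SQ$ and $NSQ$ are the nonzero squares and nonsquares of $\mathbb{F}_p$. $D_{f,0}=\{x:f(x)=0\}$, $D_{f,sq}=\{x:f(x)\in SQ\}$, $D_{f,nsq}=\{x:f(x)\in NSQ\}$. For $D=\{x_1,\dots,x_m\}\subseteq V_n^{(p)}$, $\mathcal{C}_D=\{(\langle a,x_1\rangle_n,\dots,\langle a,x_m\rangle_n):a\in V_n^{(p)}\}$. A linear code is self-orthogonal if $\mathcal{C}\subseteq\mathcal{C}^\perp$ with respect to the standard dot product. *)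

(* Defs.v *)
From HB Require Import structures.
From mathcomp Require Import all_boot all_order all_algebra.
Set Implicit Arguments. Unset Strict Implicit. Unset Printing Implicit Defensive.
Import GRing.Theory.
Local Open Scope ring_scope.

Section Defs.
Variables (p n : nat).

(* V_n^(p) = 'rV['F_p]_n; a symmetric bilinear form is given by a
   (symmetric, invertible = non-degenerate) Gram matrix M:
   <x, y>_n = x M y^T. *)
Definition bform (M : 'M['F_p]_n) (x y : 'rV['F_p]_n) : 'F_p :=
  (x *m M *m y^T) 0 0.

Definition nondeg_sym_form (M : 'M['F_p]_n) : Prop :=
  M^T = M /\ M \in unitmx.

Definition SQ : {set 'F_p} :=
  [set y : 'F_p | (y != 0) && [exists z : 'F_p, z ^+ 2 == y]].
Definition NSQ : {set 'F_p} :=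
  [set y : 'F_p | (y != 0) && ~~ [exists z : 'F_p, z ^+ 2 == y]].

Definition D_f0 (f : 'rV['F_p]_n -> 'F_p) : {set 'rV['F_p]_n} :=
  [set x | f x == 0].
Definition D_fsq (f : 'rV['F_p]_n -> 'F_p) : {set 'rV['F_p]_n} :=
  [set x | f x \in SQ].
Definition D_fnsq (f : 'rV['F_p]_n -> 'F_p) : {set 'rV['F_p]_n} :=
  [set x | f x \in NSQ].

Definition defcode (M : 'M['F_p]_n) (D : {set 'rV['F_p]_n})
  : {set 'rV['F_p]_#|D|} :=
  [set \row_(i < #|D|) bform M a (enum_val i) | a : 'rV['F_p]_n].

End Defs.

Definition self_orthogonal (q m : nat) (C : {set 'rV['F_q]_m}) : Prop :=
  forall c c', c \in C -> c' \in C -> \sum_(i < m) c 0 i * c' 0 i = 0.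

(* Main.v *)
Require Import Defs.
From HB Require Import structures.
From mathcomp Require Import all_boot all_order all_algebra.
Import GRing.Theory.
Local Open Scope ring_scope.

Section Aux.
Variables (p n : nat) (M : 'M['F_p]_n).
Hypothesis pp : prime p.
Hypothesis p3 : (3 < p)%N.

Lemma natFp_neq0 k : (0 < k)%N -> (k < p)%N -> (k%:R : 'F_p) != 0.
Proof.
move=> k0 kp; rewrite -(dvdn_pcharf (pchar_Fp pp)).
by apply/negP => /(dvdn_leq k0); rewrite leqNgt kp.
Qed.

Lemma bformZ a k (x : 'rV['F_p]_n) : bform M a (k *: x) = k * bform M a x.
Proof. by rewrite /bform linearZ /= -scalemxAr mxE. Qed.

Lemma key (D : {set 'rV['F_p]_n}) :
  (forall x, (2%:R *: x \in D) = (x \in D)) ->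
  forall a b, \sum_(x in D) bform M a x * bform M b x = 0.
Proof.
move=> hD a b.
set S := \sum_(x in D) _.
have h2 : (2%:R : 'F_p) != 0 by apply: natFp_neq0 => //; apply: ltn_trans p3.
have h3 : (3%:R : 'F_p) != 0 by apply: natFp_neq0.
have E : S = 4%:R * S.
  rewrite /S mulr_sumr {1}(reindex_inj (scalerI h2)) /=.
  rewrite (eq_bigl (fun x => x \in D)); last by move=> x; rewrite hD.
  apply: eq_bigr => x _; rewrite !bformZ.
  by rewrite mulrACA -natrM.
have : (4%:R - 1) * S = 0 by rewrite mulrBl -E mul1r subrr.
rewrite -natr1 addrK.
by move/eqP; rewrite mulf_eq0 (negPf h3) /= => /eqP.
Qed.

Lemma so (D : {set 'rV['F_p]_n}) :
  (forall x, (2%:R *: x \in D) = (x \in D)) ->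
  self_orthogonal (defcode M D).
Proof.
move=> hD c c' /imsetP [a _ ->] /imsetP [b _ ->].
under eq_bigr do rewrite !mxE.
by rewrite -(big_enum_val (fun x => bform M a x * bform M b x)) key.
Qed.

End Aux.

Theorem lemma14 (p n : nat) (M : 'M['F_p]_n) (f : 'rV['F_p]_n -> 'F_p) :
  prime p -> (3 < p)%N -> nondeg_sym_form M ->
  f 0 = 0 ->
  (forall a : 'F_p, a != 0 ->
     exists l : nat, [/\ ~~ odd l, (2 <= l)%N, (l <= p.-1)%N &
       forall x : 'rV['F_p]_n, f (a *: x) = a ^+ l * f x]) ->
  [/\ self_orthogonal (defcode M (D_f0 f :\ 0)),
      self_orthogonal (defcode M (D_fsq f)) &
      self_orthogonal (defcode M (D_fnsq f))].
Proof.
move=> pp p3 _ f0 hf.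
have h2 : (2%:R : 'F_p) != 0 by apply: natFp_neq0 => //; apply: ltn_trans p3.
have [l [el _ _ hl]] := hf _ h2.
set s : 'F_p := 2%:R ^+ l./2.
have s0 : s != 0 by rewrite expf_neq0.
have hs x : f (2%:R *: x) = s ^+ 2 * f x.
  by rewrite hl /s -exprM -{1}(odd_double_half l) (negPf el) add0n -muln2.
have sqE y : [exists z : 'F_p, z ^+ 2 == s ^+ 2 * y] = [exists z : 'F_p, z ^+ 2 == y].
  apply/existsP/existsP => [[z /eqP hz]|[z /eqP hz]].
    exists (z / s); apply/eqP; rewrite expr_div_n hz mulrC mulKf // expf_neq0 //.
  by exists (s * z); rewrite exprMn hz.
have nzE y : (s ^+ 2 * y != 0) = (y != 0) by rewrite mulf_eq0 negb_or expf_neq0.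
split; apply: so => // x.
- rewrite !in_setD1 !in_set hs mulf_eq0 (negPf (expf_neq0 _ s0)) /=.
  by rewrite scaler_eq0 (negPf h2).
- by rewrite /D_fsq /D_fnsq !in_set hs nzE sqE.
- by rewrite /D_fsq /D_fnsq !in_set hs nzE sqE.
Qed.
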